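(* Let $\Lambda$ denote the von Mangoldt function and let $\varepsilon>0$ be a small number. Then, as $x\to\infty$, \[ \sum_{n\leq x} \Lambda\left( [x/n]+1 \right) = c_0 x + O\left( x^{(2+\varepsilon)/3}\log^2 x \right), \] where the density constant is \[ c_0=\sum_{n\geq 1}\frac{\Lambda(n+1)}{n(n+1)}\geq 0.7553658. \]
   Context: $[t]$ denotes the largest integer not exceeding $t$. The von Mangoldt function is $\Lambda(m)=\log p$ if $m=p^k$ for a prime $p$ and an integer $k\geq 1$, and $\Lambda(m)=0$ otherwise. The sum is over positive integers $n\le x$. *)

(* Defs.v *)
From Stdlib Require Import Reals List ClassicalEpsilon.
From Coquelicot Require Import Coquelicot.
From mathcomp Require Import ssreflect ssrbool ssrnat prime.

Open Scope R_scope.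

Definition is_prime_power_of (m p : nat) : Prop :=
  prime p /\ exists k : nat, (1 <= k)%coq_nat /\ m = (p ^ k)%nat.

Definition vonMangoldt (m : nat) : R :=
  match excluded_middle_informative (exists p, is_prime_power_of m p) with
  | left H => ln (INR (proj1_sig (constructive_indefinite_description _ H)))
  | right _ => 0
  end.

(* [t] : largest integer not exceeding t (Stdlib Int_part = up t - 1) *)
Definition floorR (t : R) : Z := Int_part t.

Definition sum_1_to (N : nat) (f : nat -> R) : R :=
  fold_right Rplus 0 (map f (seq 1 N)).

Definition S (x : R) : R :=
  sum_1_to (Z.to_nat (floorR x))
    (fun n => vonMangoldt (Z.to_nat (floorR (x / INR n)) + 1)%nat).

(* term of the series defining c0, shifted so that index k corresponds to n = k+1 *)
Definition c0_term (k : nat) : R :=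
  vonMangoldt (k + 2)%nat / (INR (k + 1) * INR (k + 2)).

Definition c0 : R := Series c0_term.

(* Main.v *)
Require Import Defs.
From Stdlib Require Import Reals Lra Lia List ZArith ClassicalEpsilon.
From Coquelicot Require Import Coquelicot.
Open Scope R_scope.
Notation suc := Datatypes.S.

Definition lsum (l : list nat) (f : nat -> R) : R := fold_right Rplus 0 (map f l).

Lemma lsum_nil f : lsum nil f = 0. Proof. reflexivity. Qed.
Lemma lsum_cons a l f : lsum (a :: l) f = f a + lsum l f. Proof. reflexivity. Qed.

Lemma lsum_app l1 l2 f : lsum (l1 ++ l2) f = lsum l1 f + lsum l2 f.
Proof. induction l1 as [|a l1 IH]; unfold lsum in *; simpl; [ring| rewrite IH; ring]. Qed.

Lemma lsum_ext l f g : (forall i, In i l -> f i = g i) -> lsum l f = lsum l g.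
Proof.
  induction l; intros H; [reflexivity|].
  rewrite !lsum_cons, H by (left; auto). rewrite IHl; auto. intros; apply H; right; auto.
Qed.

Lemma lsum_le l f g : (forall i, In i l -> f i <= g i) -> lsum l f <= lsum l g.
Proof.
  induction l; intros H; [rewrite !lsum_nil; lra|].
  rewrite !lsum_cons. assert (f a <= g a) by (apply H; left; auto).
  assert (lsum l f <= lsum l g) by (apply IHl; intros; apply H; right; auto). lra.
Qed.

Lemma lsum_plus l f g : lsum l (fun i => f i + g i) = lsum l f + lsum l g.
Proof. induction l; [rewrite !lsum_nil; ring| rewrite !lsum_cons, IHl; ring]. Qed.

Lemma lsum_minus l f g : lsum l (fun i => f i - g i) = lsum l f - lsum l g.
Proof. induction l; [rewrite !lsum_nil; ring| rewrite !lsum_cons, IHl; ring]. Qed.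

Lemma lsum_scal l c f : lsum l (fun i => c * f i) = c * lsum l f.
Proof. induction l; [rewrite !lsum_nil; ring| rewrite !lsum_cons, IHl; ring]. Qed.

Lemma lsum_const l c : lsum l (fun _ => c) = INR (length l) * c.
Proof. induction l; [rewrite !lsum_nil; simpl; ring| rewrite !lsum_cons, IHl, length_cons, S_INR; ring]. Qed.

Lemma lsum_abs l f : Rabs (lsum l f) <= lsum l (fun i => Rabs (f i)).
Proof.
  induction l; [rewrite !lsum_nil, Rabs_R0; lra|].
  rewrite !lsum_cons. eapply Rle_trans; [apply Rabs_triang|]. lra.
Qed.

Lemma lsum_swap l1 l2 F :
  lsum l1 (fun i => lsum l2 (F i)) = lsum l2 (fun j => lsum l1 (fun i => F i j)).
Proof.
  induction l1.
  - rewrite lsum_nil. symmetry. rewrite (lsum_ext _ _ (fun _ => 0)).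
    + rewrite lsum_const; ring.
    + intros; reflexivity.
  - rewrite lsum_cons, IHl1. rewrite <- lsum_plus. apply lsum_ext. intros; reflexivity.
Qed.

Lemma lsum_single a L k G : (a <= k < a + L)%nat ->
  lsum (seq a L) (fun m => if Nat.eqb m k then G m else 0) = G k.
Proof.
  revert a. induction L; intros a H; [lia|].
  simpl seq. rewrite lsum_cons. destruct (Nat.eqb_spec a k).
  - subst. rewrite (lsum_ext _ _ (fun _ => 0)).
    + rewrite lsum_const; ring.
    + intros i Hi. apply in_seq in Hi. destruct (Nat.eqb_spec i k); [lia|auto].
  - rewrite IHL by lia. ring.
Qed.

Lemma lsum_count N c : (c <= N)%nat ->
  lsum (seq 1 N) (fun n => if Nat.leb n c then 1 else 0) = INR c.
Proof.
  revert c. induction N as [|N IHN]; intros c H.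
  - replace c with 0%nat by lia. reflexivity.
  - rewrite seq_S, lsum_app, lsum_cons, lsum_nil.
    destruct (Nat.eq_dec c (suc N)) as [e|e].
    + subst c. rewrite (lsum_ext _ _ (fun _ => 1)).
      * rewrite lsum_const, length_seq.
        replace (1 + N)%nat with (suc N) by lia. rewrite Nat.leb_refl, S_INR. ring.
      * intros i Hi; apply in_seq in Hi. destruct (Nat.leb_spec i (suc N)); [auto|lia].
    + rewrite IHN by lia.
      destruct (Nat.leb_spec (1 + N) c); [lia| ring].
Qed.

Lemma lsum_tele a L u : lsum (seq a L) (fun m => u m - u (suc m)) = u a - u (a + L)%nat.
Proof.
  revert a. induction L; intros a.
  - rewrite Nat.add_0_r; simpl; rewrite lsum_nil; ring.
  - simpl seq. rewrite lsum_cons, IHL. replace (suc a + L)%nat with (a + suc L)%nat by lia. ring.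
Qed.

Lemma sum_n_lsum (a : nat -> R) n : sum_n a n = lsum (seq 0 (suc n)) a.
Proof.
  induction n as [|n IHn].
  - rewrite sum_O. unfold lsum; simpl. change (a 0%nat = a 0%nat + 0). ring.
  - rewrite sum_Sn, IHn, (seq_S (suc n)), lsum_app. unfold lsum; simpl.
    change (a 0%nat + fold_right Rplus 0 (map a (seq 1 n)) + a (suc n) =
      a 0%nat + fold_right Rplus 0 (map a (seq 1 n)) + (a (suc n) + 0)). ring.
Qed.

Lemma lsum_shift M f : lsum (seq 1 M) f = lsum (seq 0 M) (fun k => f (suc k)).
Proof. rewrite <- seq_shift. unfold lsum. rewrite map_map. reflexivity. Qed.

Definition fl (y : R) : nat := Z.to_nat (floorR y).

Lemma fl_spec y : 0 <= y -> INR (fl y) <= y < INR (fl y) + 1.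
Proof.
  intros Hy. unfold fl, floorR. destruct (base_Int_part y) as [H1 H2].
  assert (Hz : (0 <= Int_part y)%Z).
  { assert (IZR (Int_part y) > -1) by lra. apply lt_IZR in H. lia. }
  rewrite INR_IZR_INZ, Z2Nat.id by exact Hz. lra.
Qed.

Lemma fl_le_iff y k : 0 <= y -> ((k <= fl y)%nat <-> INR k <= y).
Proof.
  intros Hy. destruct (fl_spec y Hy) as [H1 H2]. split; intros H.
  - apply le_INR in H. lra.
  - assert (INR k < INR (fl y) + 1) by lra. rewrite <- S_INR in H0. apply INR_lt in H0. lia.
Qed.

Lemma fl_mono y z : 0 <= y <= z -> (fl y <= fl z)%nat.
Proof.
  intros [H1 H2]. apply fl_le_iff; [lra|]. destruct (fl_spec y H1). lra.
Qed.

From mathcomp Require ssreflect ssrfun ssrbool eqtype ssrnat div prime.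

Section VM.
Import ssreflect ssrfun ssrbool eqtype ssrnat div prime.

Lemma ppow_uniq p q k j : prime p -> prime q -> (0 < k)%N -> (p ^ k = q ^ j)%N -> p = q.
Proof.
move=> pp pq k0 e.
have : (p %| q ^ j)%N by rewrite -e dvdn_exp.
rewrite Euclid_dvdX // => /andP [H _].
by apply/eqP; rewrite -dvdn_prime2.
Qed.

Lemma vM_pk p k : prime p -> (0 < k)%N -> vonMangoldt (p ^ k) = ln (INR p).
Proof.
move=> pp k0; rewrite /vonMangoldt.
case: excluded_middle_informative => [H|H]; last first.
  by exfalso; apply: H; exists p; split=> //; exists k; split=> //; apply/leP.
case: (constructive_indefinite_description _ H) => q [pq [j [j1 e]]] /=.
have j0 : (0 < j)%N by apply/leP.
by rewrite (ppow_uniq _ _ _ _ pq pp j0 (esym e)).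
Qed.

Lemma vM_nonneg m : 0 <= vonMangoldt m.
Proof.
rewrite /vonMangoldt; case: excluded_middle_informative => [H|H]; last by apply: Rle_refl.
case: (constructive_indefinite_description _ H) => q [pq _] /=.
rewrite -ln_1; apply: ln_le; first lra.
have : (1 <= q)%N by apply: ltnW; apply: prime_gt1.
by move/leP => /le_INR.
Qed.

Lemma vM_le m : (0 < m)%N -> vonMangoldt m <= ln (INR m).
Proof.
move=> m0; rewrite /vonMangoldt; case: excluded_middle_informative => [H|H]; last first.
  rewrite -ln_1; apply: ln_le; first lra.
  by move/leP: m0 => /le_INR.
case: (constructive_indefinite_description _ H) => q [pq [j [j1 e]]] /=.
have q1 : (1 <= q)%N by apply: ltnW; apply: prime_gt1.
apply: ln_le.
  by apply: lt_0_INR; apply/leP.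
apply: le_INR; apply/leP; rewrite e.
have j0 : (0 < j)%N by apply/leP.
by rewrite -{1}(expn1 q) leq_pexp2l.
Qed.

Lemma vM_p p : prime p -> vonMangoldt p = ln (INR p).
Proof. by move=> pp; rewrite -{1}(expn1 p) vM_pk. Qed.

Lemma vM2 : vonMangoldt 2 = ln (INR 2). Proof. exact: vM_p. Qed.
Lemma vM3 : vonMangoldt 3 = ln (INR 3). Proof. exact: vM_p. Qed.
Lemma vM5 : vonMangoldt 5 = ln (INR 5). Proof. exact: vM_p. Qed.
Lemma vM7 : vonMangoldt 7 = ln (INR 7). Proof. exact: vM_p. Qed.
Lemma vM11 : vonMangoldt 11 = ln (INR 11). Proof. exact: vM_p. Qed.
Lemma vM13 : vonMangoldt 13 = ln (INR 13). Proof. exact: vM_p. Qed.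
Lemma vM17 : vonMangoldt 17 = ln (INR 17). Proof. exact: vM_p. Qed.
Lemma vM4 : vonMangoldt 4 = ln (INR 2). Proof. exact: (vM_pk 2 2). Qed.
Lemma vM8 : vonMangoldt 8 = ln (INR 2). Proof. exact: (vM_pk 2 3). Qed.
Lemma vM16 : vonMangoldt 16 = ln (INR 2). Proof. exact: (vM_pk 2 4). Qed.
Lemma vM9 : vonMangoldt 9 = ln (INR 3). Proof. exact: (vM_pk 3 2). Qed.
Lemma vM_le' m : (1 <= m)%coq_nat -> vonMangoldt m <= ln (INR m).
Proof. by move=> H; apply: vM_le; apply/leP. Qed.
End VM.


Definition G (m : nat) : R := vonMangoldt (m + 1)%nat.

Lemma le_div_iff a b x : 0 < b -> (a <= x / b <-> a * b <= x).
Proof.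
  intros Hb; split; intros H.
  - apply Rmult_le_compat_r with (r:=b) in H; [|lra].
    unfold Rdiv in H; rewrite Rmult_assoc, Rinv_l in H; lra.
  - apply Rmult_le_reg_r with b; auto. unfold Rdiv; rewrite Rmult_assoc, Rinv_l; lra.
Qed.

Lemma div_le_self x b : 0 <= x -> 1 <= b -> x / b <= x.
Proof.
  intros Hx Hb. unfold Rdiv. rewrite <- (Rmult_1_r x) at 2.
  apply Rmult_le_compat_l; auto. rewrite <- Rinv_1. apply Rinv_le_contravar; lra.
Qed.

Lemma div_nonneg x b : 0 <= x -> 0 < b -> 0 <= x / b.
Proof. intros; unfold Rdiv; apply Rmult_le_pos; auto; left; apply Rinv_0_lt_compat; auto. Qed.

Lemma INR_pos n : (1 <= n)%nat -> 1 <= INR n.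
Proof. intros; apply (le_INR 1); auto. Qed.

Lemma S_lsum x : S x = lsum (seq 1 (fl x)) (fun n => G (fl (x / INR n))).
Proof. reflexivity. Qed.

Lemma key x n m : 0 <= x -> (1 <= n)%nat -> (1 <= m)%nat ->
  ((n <= fl (x / INR m))%nat <-> (m <= fl (x / INR n))%nat).
Proof.
  intros Hx Hn Hm. pose proof (INR_pos _ Hn). pose proof (INR_pos _ Hm).
  rewrite !fl_le_iff by (apply div_nonneg; lra).
  rewrite !le_div_iff by lra. rewrite Rmult_comm. tauto.
Qed.

Lemma c_bounds x n : 0 <= x -> (1 <= n)%nat -> (fl (x / INR n) <= fl x)%nat.
Proof.
  intros Hx Hn. apply fl_mono. split; [apply div_nonneg|apply div_le_self]; auto.
  pose proof (INR_pos _ Hn); lra. apply INR_pos; auto.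
Qed.

Lemma c_ge1 x n : 0 <= x -> (1 <= n <= fl x)%nat -> (1 <= fl (x / INR n))%nat.
Proof.
  intros Hx Hn. pose proof (INR_pos n (proj1 Hn)).
  apply fl_le_iff; [apply div_nonneg; lra|]. apply le_div_iff; [lra|].
  rewrite Rmult_1_l. apply fl_le_iff; auto. lia.
Qed.

Lemma S_ident x : 0 <= x ->
  S x = lsum (seq 1 (fl x)) (fun m => G m * (INR (fl (x / INR m)) - INR (fl (x / INR (suc m))))).
Proof.
  intros Hx. rewrite S_lsum.
  set (N := fl x). set (c := fun n => fl (x / INR n)).
  change (lsum (seq 1 N) (fun n => G (c n)) =
          lsum (seq 1 N) (fun m => G m * (INR (c m) - INR (c (suc m))))).
  transitivity (lsum (seq 1 N) (fun n => lsum (seq 1 N) (fun m =>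
     G m * ((if Nat.leb n (c m) then 1 else 0) - (if Nat.leb n (c (suc m)) then 1 else 0))))).
  - apply lsum_ext. intros n Hn. apply in_seq in Hn.
    rewrite (lsum_ext _ _ (fun m => if Nat.eqb m (c n) then G m else 0)).
    + symmetry. apply lsum_single. pose proof (c_ge1 x n Hx). pose proof (c_bounds x n Hx).
      unfold c, N in *. split; [apply H; lia| ]. assert (fl (x / INR n) <= fl x)%nat by (apply H0; lia). lia.
    + intros m Hm. apply in_seq in Hm.
      assert (E1 : Nat.leb n (c m) = Nat.leb m (c n)).
      { apply Bool.eq_iff_eq_true. rewrite !Nat.leb_le. apply key; auto; lia. }
      assert (E2 : Nat.leb n (c (suc m)) = Nat.leb (suc m) (c n)).
      { apply Bool.eq_iff_eq_true. rewrite !Nat.leb_le. apply key; auto; lia. }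
      rewrite E1, E2.
      destruct (Nat.leb_spec m (c n)); destruct (Nat.leb_spec (suc m) (c n));
        destruct (Nat.eqb_spec m (c n)); first [ring | exfalso; lia].
  - rewrite lsum_swap. apply lsum_ext. intros m Hm. apply in_seq in Hm.
    rewrite lsum_scal, lsum_minus, !lsum_count; auto.
    + apply c_bounds; auto; lia.
    + apply c_bounds; auto; lia.
Qed.

Lemma ln_le_m1 y : 0 < y -> ln y <= y - 1.
Proof. intros Hy. pose proof (exp_ineq1_le (ln y)). rewrite exp_ln in H; lra. Qed.

Lemma ln_diff_ub a b : 0 < a -> 0 < b -> ln b - ln a <= b / a - 1.
Proof.
  intros Ha Hb. assert (E : ln (b / a) = ln b - ln a).
  { unfold Rdiv. assert (0 < / a) by (apply Rinv_0_lt_compat; auto).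
    rewrite ln_mult by auto. rewrite ln_Rinv by auto. ring. }
  rewrite <- E. apply ln_le_m1. apply Rdiv_lt_0_compat; auto.
Qed.

Lemma ln_nonneg y : 1 <= y -> 0 <= ln y.
Proof. intros. rewrite <- ln_1. apply ln_le; lra. Qed.

Definition H (k : nat) : R := (1 + ln (INR k + 1)) / INR k.

Lemma H_nonneg k : (1 <= k)%nat -> 0 <= H k.
Proof.
  intros Hk. pose proof (INR_pos _ Hk). unfold H. apply div_nonneg; [|lra].
  pose proof (ln_nonneg (INR k + 1)). lra.
Qed.

Lemma c0_term_nonneg k : 0 <= c0_term k.
Proof.
  unfold c0_term. change (0 <= vonMangoldt (k+2)%nat / (INR (k+1)%nat * INR (k+2)%nat)).
  apply div_nonneg; [apply vM_nonneg|].
  apply Rmult_lt_0_compat; apply lt_0_INR; lia.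
Qed.

Lemma c0_term_tele k : (1 <= k)%nat -> c0_term k <= H k - H (suc k).
Proof.
  intros Hk. unfold c0_term, H.
  change (vonMangoldt (k+2)%nat / (INR (k+1)%nat * INR (k+2)%nat) <=
    (1 + ln (INR k + 1)) / INR k - (1 + ln (INR (suc k) + 1)) / INR (suc k)).
  pose proof (INR_pos _ Hk) as Ha. set (a := INR k) in *.
  assert (V : vonMangoldt (k+2)%nat <= ln (a + 2)).
  { replace (a + 2) with (INR (k+2)%nat) by (unfold a; rewrite plus_INR; simpl; ring). apply vM_le'; lia. }
  pose proof (vM_nonneg (k+2)%nat) as V0.
  rewrite (S_INR k), !plus_INR. fold a. simpl (INR 1); simpl (INR 2). replace (1+1) with 2 by ring.
  replace (a + 1 + 1) with (a + 2) by ring.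
  set (Vv := vonMangoldt (k+2)%nat) in *.
  pose proof (ln_diff_ub (a+1) (a+2) ltac:(lra) ltac:(lra)) as Hd.
  pose proof (ln_nonneg (a+1) ltac:(lra)) as L1p.
  pose proof (ln_nonneg (a+2) ltac:(lra)) as L2p.
  set (L1 := ln (a+1)) in *. set (L2 := ln (a+2)) in *.
  assert (E : (1 + L1) / a - (1 + L2) / (a + 1) = (1 + L2 - (a+1)*(L2-L1)) * / (a*(a+1))) by (field; lra).
  rewrite E.
  assert (Hd2 : (a+1)*(L2-L1) <= 1).
  { assert (E2 : (a+2)/(a+1) - 1 = / (a+1)) by (field; lra).
    rewrite E2 in Hd. apply Rmult_le_compat_l with (r := a+1) in Hd; [|lra].
    rewrite Rinv_r in Hd; lra. }
  unfold Rdiv. apply Rmult_le_compat; [lra| left; apply Rinv_0_lt_compat; nra | lra |].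
  apply Rinv_le_contravar; nra.
Qed.

Definition Psum (n : nat) : R := sum_n c0_term n.

Lemma Psum_S n : Psum (suc n) = Psum n + c0_term (suc n).
Proof. unfold Psum. rewrite sum_Sn. reflexivity. Qed.

Lemma Psum_incr n : Psum n <= Psum (suc n).
Proof. rewrite Psum_S. pose proof (c0_term_nonneg (suc n)). lra. Qed.

Lemma Psum_mono n m : (n <= m)%nat -> Psum n <= Psum m.
Proof.
  intros Hnm. induction Hnm; [lra|]. pose proof (Psum_incr m). lra.
Qed.

Lemma Psum_tail M j : (1 <= M)%nat -> Psum (M - 1 + j) <= Psum (M - 1) + H M - H (M + j).
Proof.
  intros HM. induction j.
  - rewrite !Nat.add_0_r. lra.
  - replace (M - 1 + suc j)%nat with (suc (M - 1 + j)) by lia. rewrite Psum_S.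
    replace (suc (M - 1 + j)) with (M + j)%nat by lia.
    pose proof (c0_term_tele (M + j) ltac:(lia)).
    replace (M + suc j)%nat with (suc (M + j)) by lia. lra.
Qed.

Lemma Psum_bound M n : (1 <= M)%nat -> Psum n <= Psum (M - 1) + H M.
Proof.
  intros HM. pose proof (H_nonneg M HM).
  destruct (le_lt_dec n (M - 1)).
  - pose proof (Psum_mono n (M-1) l). lra.
  - replace n with (M - 1 + (n - (M - 1)))%nat by lia.
    pose proof (Psum_tail M (n - (M - 1)) HM). pose proof (H_nonneg (M + (n - (M - 1))) ltac:(lia)). lra.
Qed.

Lemma c0_facts : ex_series c0_term /\ (forall n, Psum n <= c0) /\
  (forall M, (1 <= M)%nat -> c0 <= Psum (M - 1) + H M).
Proof.
  destruct (ex_finite_lim_seq_incr Psum (Psum (1 - 1) + H 1) Psum_incr (fun n => Psum_bound 1 n (le_n 1))) as [l Hl].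
  assert (Hc : c0 = l).
  { unfold c0, Series. assert (Hl2 : is_lim_seq (sum_n c0_term) l) by exact Hl. rewrite (is_lim_seq_unique _ _ Hl2). reflexivity. }
  rewrite Hc. split; [|split].
  - exists l. exact Hl.
  - intros n. apply (is_lim_seq_incr_compare Psum l Hl Psum_incr).
  - intros M HM. pose proof (is_lim_seq_le Psum (fun _ => Psum (M - 1) + H M) l _ (fun n => Psum_bound M n HM) Hl (is_lim_seq_const _)) as K.
    simpl in K. exact K.
Qed.

Definition hs (a L : nat) : R := lsum (seq a L) (fun i => / INR (suc i)).

Lemma ln_step i : (1 <= i)%nat -> / INR (suc i) <= ln (INR (suc i)) - ln (INR i).
Proof.
  intros Hi. pose proof (INR_pos _ Hi). rewrite S_INR.
  pose proof (ln_diff_ub (INR i + 1) (INR i) ltac:(lra) ltac:(lra)).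
  assert (E : INR i / (INR i + 1) - 1 = - / (INR i + 1)) by (field; lra). lra.
Qed.

Lemma ln_chain L a : (1 <= a)%nat -> hs a L <= ln (INR (a + L)) - ln (INR a).
Proof.
  revert a. induction L; intros a Ha.
  - unfold hs. simpl. rewrite lsum_nil, Nat.add_0_r. lra.
  - unfold hs. simpl seq. rewrite lsum_cons. fold (hs (suc a) L).
    pose proof (IHL (suc a) ltac:(lia)). pose proof (ln_step a Ha).
    replace (a + suc L)%nat with (suc a + L)%nat by lia. lra.
Qed.

Lemma ln_ratio a L n : (1 <= a)%nat -> (1 <= n)%nat ->
  hs (a * n) (L * n) <= ln (INR (a + L)) - ln (INR a).
Proof.
  intros Ha Hn. pose proof (ln_chain (L * n) (a * n) ltac:(nia)).
  replace (a * n + L * n)%nat with ((a + L) * n)%nat in H0 by ring.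
  rewrite !mult_INR in H0.
  pose proof (INR_pos _ Ha). pose proof (INR_pos _ Hn).
  assert (1 <= INR (a + L)) by (apply INR_pos; lia).
  rewrite !ln_mult in H0 by lra. lra.
Qed.

Lemma hsv1 : 0.6687 <= hs 10 10. Proof. unfold hs, lsum. simpl. lra. Qed.
Lemma hsv2 : 0.3972 <= hs 20 10. Proof. unfold hs, lsum. simpl. lra. Qed.
Lemma hsv4 : 0.2206 <= hs 40 10. Proof. unfold hs, lsum. simpl. lra. Qed.
Lemma hsv6 : 0.1529 <= hs 60 10. Proof. unfold hs, lsum. simpl. lra. Qed.
Lemma hsv10 : 0.0948 <= hs 100 10. Proof. unfold hs, lsum. simpl. lra. Qed.
Lemma hsv12 : 0.0797 <= hs 120 10. Proof. unfold hs, lsum. simpl. lra. Qed.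
Lemma hsv16 : 0.0604 <= hs 160 10. Proof. unfold hs, lsum. simpl. lra. Qed.

Lemma lnINR_mult a b : (1 <= a)%nat -> (1 <= b)%nat -> ln (INR (a * b)) = ln (INR a) + ln (INR b).
Proof.
  intros. rewrite mult_INR. apply ln_mult; pose proof (INR_pos _ H0); pose proof (INR_pos _ H1); lra.
Qed.

Lemma c0t k p : vonMangoldt (k + 2)%nat = ln (INR p) ->
  c0_term k = ln (INR p) / (INR (k + 1)%nat * INR (k + 2)%nat).
Proof. intros E. unfold c0_term. rewrite <- E. reflexivity. Qed.

Lemma c0_lower : 0.7553658 <= Psum 15.
Proof.
  assert (l1 : ln (INR 1) = 0) by (simpl; apply ln_1).
  pose proof (ln_ratio 1 1 10 ltac:(lia) ltac:(lia)) as r2.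
  pose proof (ln_ratio 2 1 10 ltac:(lia) ltac:(lia)) as r3.
  pose proof (ln_ratio 4 1 10 ltac:(lia) ltac:(lia)) as r5.
  pose proof (ln_ratio 6 1 10 ltac:(lia) ltac:(lia)) as r7.
  pose proof (ln_ratio 10 1 10 ltac:(lia) ltac:(lia)) as r11.
  pose proof (ln_ratio 12 1 10 ltac:(lia) ltac:(lia)) as r13.
  pose proof (ln_ratio 16 1 10 ltac:(lia) ltac:(lia)) as r17.
  simpl (1 * 10)%nat in *; simpl (2 * 10)%nat in *; simpl (4 * 10)%nat in *; simpl (6 * 10)%nat in *;
  simpl (10 * 10)%nat in *; simpl (12 * 10)%nat in *; simpl (16 * 10)%nat in *;
  simpl (1 + 1)%nat in *; simpl (2 + 1)%nat in *; simpl (4 + 1)%nat in *; simpl (6 + 1)%nat in *;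
  simpl (10 + 1)%nat in *; simpl (12 + 1)%nat in *; simpl (16 + 1)%nat in *.
  pose proof hsv1; pose proof hsv2; pose proof hsv4; pose proof hsv6; pose proof hsv10; pose proof hsv12; pose proof hsv16.
  assert (e4 : ln (INR 4) = ln (INR 2) + ln (INR 2)) by (rewrite <- lnINR_mult by lia; reflexivity).
  assert (e6 : ln (INR 6) = ln (INR 2) + ln (INR 3)) by (rewrite <- lnINR_mult by lia; reflexivity).
  assert (e10 : ln (INR 10) = ln (INR 2) + ln (INR 5)) by (rewrite <- lnINR_mult by lia; reflexivity).
  assert (e12 : ln (INR 12) = ln (INR 4) + ln (INR 3)) by (rewrite <- lnINR_mult by lia; reflexivity).
  assert (e16 : ln (INR 16) = ln (INR 4) + ln (INR 4)) by (rewrite <- lnINR_mult by lia; reflexivity).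
  pose proof (c0t 0 2 vM2) as t0. pose proof (c0t 1 3 vM3) as t1. pose proof (c0t 2 2 vM4) as t2.
  pose proof (c0t 3 5 vM5) as t3. pose proof (c0t 5 7 vM7) as t5. pose proof (c0t 6 2 vM8) as t6.
  pose proof (c0t 7 3 vM9) as t7. pose proof (c0t 9 11 vM11) as t9. pose proof (c0t 11 13 vM13) as t11.
  pose proof (c0t 14 2 vM16) as t14. pose proof (c0t 15 17 vM17) as t15.
  pose proof (c0_term_nonneg 4). pose proof (c0_term_nonneg 8). pose proof (c0_term_nonneg 10).
  pose proof (c0_term_nonneg 12). pose proof (c0_term_nonneg 13).
  unfold Psum. rewrite sum_n_lsum. unfold lsum. cbn [seq map fold_right].
  rewrite t0, t1, t2, t3, t5, t6, t7, t9, t11, t14, t15.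
  simpl (INR (_ + _)).
  set (L2 := ln (INR 2)) in *. set (L3 := ln (INR 3)) in *. set (L5 := ln (INR 5)) in *.
  set (L7 := ln (INR 7)) in *. set (L11 := ln (INR 11)) in *. set (L13 := ln (INR 13)) in *.
  set (L17 := ln (INR 17)) in *. set (L4 := ln (INR 4)) in *. set (L6 := ln (INR 6)) in *.
  set (L10 := ln (INR 10)) in *. set (L12 := ln (INR 12)) in *. set (L16 := ln (INR 16)) in *.
  lra.
Qed.

Lemma c0_term_G k : c0_term k = G (suc k) / (INR (suc k) * INR (suc (suc k))).
Proof.
  unfold c0_term, G.
  change (vonMangoldt (k+2)%nat / (INR (k+1)%nat * INR (k+2)%nat) =
          vonMangoldt (suc k + 1)%nat / (INR (suc k) * INR (suc (suc k)))).
  replace (suc k + 1)%nat with (k+2)%nat by lia.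
  replace (k+1)%nat with (suc k) by lia. replace (k+2)%nat with (suc (suc k)) by lia. reflexivity.
Qed.

Lemma G_nonneg m : 0 <= G m.
Proof. apply vM_nonneg. Qed.

Lemma G_le x m : 0 <= x -> (1 <= m <= fl x)%nat -> G m <= ln (x + 1).
Proof.
  intros Hx Hm. unfold G. eapply Rle_trans; [apply vM_le'; lia|].
  rewrite plus_INR. simpl (INR 1). apply ln_le.
  - pose proof (pos_INR m); lra.
  - assert (INR m <= x) by (apply fl_le_iff; auto; lia). lra.
Qed.

Lemma d_nonneg x m : 0 <= x -> (1 <= m)%nat ->
  0 <= INR (fl (x / INR m)) - INR (fl (x / INR (suc m))).
Proof.
  intros Hx Hm. pose proof (INR_pos _ Hm).
  assert (fl (x / INR (suc m)) <= fl (x / INR m))%nat.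
  { apply fl_mono. rewrite S_INR. split; [apply div_nonneg; lra|].
    unfold Rdiv. apply Rmult_le_compat_l; auto. apply Rinv_le_contravar; lra. }
  apply le_INR in H1. lra.
Qed.

Lemma d_approx x m : 0 <= x -> (1 <= m)%nat ->
  Rabs (INR (fl (x / INR m)) - INR (fl (x / INR (suc m))) - x / (INR m * INR (suc m))) <= 1.
Proof.
  intros Hx Hm. pose proof (INR_pos _ Hm).
  assert (E : x / (INR m * INR (suc m)) = x / INR m - x / (INR (suc m))) by (rewrite S_INR; field; lra).
  rewrite E.
  destruct (fl_spec (x / INR m)) as [a1 a2]; [apply div_nonneg; lra|].
  destruct (fl_spec (x / INR (suc m))) as [b1 b2]; [rewrite S_INR; apply div_nonneg; lra|].
  apply Rabs_le. lra.
Qed.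

Lemma ln4_ge1 : 1 <= ln 4.
Proof.
  rewrite <- (ln_exp 1). apply ln_le; [apply exp_pos|]. pose proof exp_le_3. lra.
Qed.

Lemma main_bound x : 4 <= x -> Rabs (S x - c0 * x) <= 10 * sqrt x * ln x.
Proof.
  intros Hx4.
  assert (Hx : 0 <= x) by lra.
  set (s := sqrt x).
  assert (ss : s * s = x) by (apply sqrt_sqrt; lra).
  assert (s2 : 2 <= s).
  { unfold s. rewrite <- sqrt_square with 2 by lra. apply sqrt_le_1_alt. lra. }
  set (N := fl x). set (M := fl s).
  destruct (fl_spec s ltac:(lra)) as [M1 M2]. fold M in M1, M2.
  assert (HM1 : (1 <= M)%nat).
  { apply fl_le_iff; [lra|]. simpl. lra. }
  assert (HMN : (M <= N)%nat) by (apply fl_mono; nra).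
  pose proof (INR_pos _ HM1) as HMr.
  destruct (fl_spec x Hx) as [N1 N2]. fold N in N1, N2.
  assert (lx1 : 1 <= ln x) by (eapply Rle_trans; [apply ln4_ge1| apply ln_le; lra]).
  assert (lxx : ln (x + 1) <= 2 * ln x).
  { replace (2 * ln x) with (ln (x * x)) by (rewrite ln_mult; lra). apply ln_le; nra. }
  set (Lx := ln (x + 1)) in *.
  assert (Lx0 : 0 <= Lx) by (unfold Lx; apply ln_nonneg; lra).
  rewrite (S_ident x Hx). fold N.
  replace N with (M + (N - M))%nat by lia. rewrite seq_app, lsum_app.
  set (f := fun m => G m * (INR (fl (x / INR m)) - INR (fl (x / INR (suc m))))).
  set (A := lsum (seq 1 M) f). set (B := lsum (seq (1 + M) (N - M)) f).
  destruct c0_facts as [_ [cl cu]].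
  pose proof (cl (M - 1)%nat) as P1. pose proof (cu M HM1) as P2.
  set (P := Psum (M - 1)) in *.
  assert (PE : P = lsum (seq 1 M) (fun m => G m / (INR m * INR (suc m)))).
  { unfold P, Psum. rewrite sum_n_lsum. replace (suc (M - 1)) with M by lia.
    rewrite lsum_shift. apply lsum_ext. intros k _. apply c0_term_G. }
  assert (HA : Rabs (A - x * P) <= INR M * Lx).
  { rewrite PE. unfold A. rewrite <- lsum_scal, <- lsum_minus.
    eapply Rle_trans; [apply lsum_abs|].
    replace (INR M * Lx) with (lsum (seq 1 M) (fun _ => Lx)) by (rewrite lsum_const, length_seq; ring).
    apply lsum_le. intros m Hm. apply in_seq in Hm.
    unfold f. replace (G m * (INR (fl (x / INR m)) - INR (fl (x / INR (suc m)))) -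
                 x * (G m / (INR m * INR (suc m))))
      with (G m * (INR (fl (x / INR m)) - INR (fl (x / INR (suc m))) - x / (INR m * INR (suc m))))
      by (unfold Rdiv; ring).
    rewrite Rabs_mult, (Rabs_pos_eq (G m)) by apply G_nonneg.
    rewrite <- (Rmult_1_r Lx). apply Rmult_le_compat; [apply G_nonneg|apply Rabs_pos| |].
    - apply G_le; auto; lia.
    - apply d_approx; auto; lia. }
  assert (HB : 0 <= B <= Lx * s).
  { split.
    - unfold B. replace 0 with (lsum (seq (1 + M) (N - M)) (fun _ => 0)) by (rewrite lsum_const; ring).
      apply lsum_le. intros m Hm. apply in_seq in Hm. unfold f.
      apply Rmult_le_pos; [apply G_nonneg| apply d_nonneg; auto; lia].
    - unfold B. eapply Rle_trans.
      + apply (lsum_le _ _ (fun m => Lx * (INR (fl (x / INR m)) - INR (fl (x / INR (suc m)))))).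
        intros m Hm. apply in_seq in Hm. unfold f. apply Rmult_le_compat_r.
        * apply d_nonneg; auto; lia.
        * apply G_le; auto; lia.
      + rewrite lsum_scal. pose proof (lsum_tele (1 + M) (N - M) (fun m => INR (fl (x / INR m)))) as T.
        cbv beta in T. rewrite T. apply Rmult_le_compat_l; auto.
        pose proof (pos_INR (fl (x / INR (1 + M + (N - M))))).
        destruct (fl_spec (x / INR (1 + M))) as [c1 _].
        { apply div_nonneg; auto. rewrite plus_INR; simpl; lra. }
        assert (x / INR (1 + M) <= s).
        { rewrite plus_INR. simpl (INR 1).
          assert (x / (1 + INR M) <= x / s) by (unfold Rdiv; apply Rmult_le_compat_l; [lra| apply Rinv_le_contravar; lra]).
          assert (x / s = s) by (rewrite <- ss; field; lra). lra. }
        lra. }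
  assert (E : A + B - c0 * x = (A - x * P) + B - x * (c0 - P)) by ring.
  rewrite E.
  assert (HH : x * (c0 - P) <= 2 * s * (1 + Lx)).
  { assert (c0 - P <= H M) by lra.
    unfold H in H0.
    assert (ln (INR M + 1) <= Lx) by (unfold Lx; apply ln_le; nra).
    assert (x * (c0 - P) <= x * ((1 + Lx) / INR M)).
    { apply Rmult_le_compat_l; auto. eapply Rle_trans; [exact H0|].
      unfold Rdiv. apply Rmult_le_compat_r; [left; apply Rinv_0_lt_compat; lra| lra]. }
    assert (x * ((1 + Lx) / INR M) <= 2 * s * (1 + Lx)).
    { replace (x * ((1 + Lx) / INR M)) with ((1 + Lx) * (x / INR M)) by (field; lra).
      rewrite (Rmult_comm (2 * s)). apply Rmult_le_compat_l; [lra|].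
      assert (2 * INR M >= s) by lra.
      apply Rmult_le_reg_r with (INR M); [lra|]. unfold Rdiv. rewrite Rmult_assoc, Rinv_l by lra. nra. }
    lra. }
  assert (c0 - P >= 0) by lra.
  assert (x * (c0 - P) >= 0) by nra.
  eapply Rle_trans.
  { apply Rabs_le with (b := INR M * Lx + Lx * s + 2 * s * (1 + Lx)).
    pose proof (Rle_abs (A - x * P)) as R1. pose proof (Rle_abs (- (A - x * P))) as R2. rewrite Rabs_Ropp in R2.
    split; nra. }
  assert (INR M * Lx <= s * Lx) by (apply Rmult_le_compat_r; lra).
  assert (s * Lx <= s * (2 * ln x)) by (apply Rmult_le_compat_l; lra).
  assert (s <= s * ln x) by nra.
  nra.
Qed.

Theorem theorem1p1 :
  ex_series c0_term /\ c0 >= 0.7553658 /\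
  forall eps : R, 0 < eps ->
    exists C X0 : R, forall x : R, X0 <= x ->
      Rabs (S x - c0 * x) <= C * Rpower x ((2 + eps) / 3) * (ln x) ^ 2.
Proof.
  destruct c0_facts as [ex [cl _]].
  split; [exact ex|]. split.
  { pose proof c0_lower. pose proof (cl 15%nat). lra. }
  intros eps Heps. exists 10, 4. intros x Hx.
  eapply Rle_trans; [apply main_bound; auto|].
  assert (lx1 : 1 <= ln x) by (eapply Rle_trans; [apply ln4_ge1| apply ln_le; lra]).
  assert (sq : sqrt x <= Rpower x ((2 + eps) / 3)).
  { rewrite <- Rpower_sqrt by lra. apply Rle_Rpower; lra. }
  pose proof (sqrt_pos x).
  assert (ln x <= ln x ^ 2) by (simpl; nra).
  replace (10 * sqrt x * ln x) with (10 * (sqrt x * ln x)) by ring.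
  replace (10 * Rpower x ((2 + eps) / 3) * ln x ^ 2) with (10 * (Rpower x ((2 + eps) / 3) * ln x ^ 2)) by ring.
  apply Rmult_le_compat_l; [lra|].
  apply Rmult_le_compat; lra.
Qed.
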